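(* Let $\mathbf{DLat}$ be the class of bounded distributive lattices. Then: (i) $\mathbf{DLat}=\omega_0\mathbf{JD}=\omega_0\mathbf{Frm}$; (ii) for regular cardinals $\lambda\le\kappa$, $\kappa\mathbf{JD}\subseteq\lambda\mathbf{JD}$ and $\kappa\mathbf{Frm}\subseteq\lambda\mathbf{Frm}$, and both inclusions are proper when $\lambda<\kappa$; (iii) $\kappa\mathbf{Frm}\subseteq\kappa\mathbf{JD}$ for every regular $\kappa$, and this inclusion is proper for $\kappa>\omega_0$; (iv) $\mathbf{JID}=\bigcap_\kappa\kappa\mathbf{JD}$ and $\mathbf{Frm}=\bigcap_\kappa\kappa\mathbf{Frm}$, the intersections ranging over all regular cardinals.
   Context: For a regular cardinal $\kappa$, a $\kappa$-join is a join of a set of cardinality $<\kappa$; $\omega_0$ denotes the first infinite cardinal. An existing join $\bigvee S$ in a lattice $A$ is distributive if $a\wedge\bigvee S=\bigvee\{a\wedge s:s\in S\}$ for all $a\in A$. $\kappa\mathbf{JD}$ is the class of bounded distributive lattices in which every existing $\kappa$-join is distributive; $\kappa\mathbf{Frm}$ is the class of bounded distributive lattices in which all $\kappa$-joins exist and are distributive ($\kappa$-frames); $\mathbf{JID}$ is the class of bounded distributive lattices in which every existing join is distributive; $\mathbf{Frm}$ is the class of frames. *)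

(* Defs.v *)
From HB Require Import structures.
From mathcomp Require Import all_boot all_order.
From mathcomp Require Import boolp classical_sets functions cardinality.
Set Implicit Arguments. Unset Strict Implicit. Unset Printing Implicit Defensive.
Import Order.TTheory.
Local Open Scope classical_set_scope.
Local Open Scope order_scope.

Definition card_lt T U (A : set T) (B : set U) : Prop :=
  (A #<= B)%card /\ ~ (B #<= A)%card.

(* A type K represents the cardinal |K|.  K is a regular cardinal iff it is
   infinite and K is not the union of fewer than |K| sets each of
   cardinality < |K| (the family is indexed by a subset X of K, which is no
   loss since any index set of size < |K| injects into K). *)
Definition regular_card (K : Type) : Prop :=
  infinite_set (@setT K) /\
  forall (X : set K) (A : K -> set K),
    card_lt X (@setT K) -> (forall i, X i -> card_lt (A i) (@setT K)) ->
    \bigcup_(i in X) A i <> setT.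

Definition is_join d (L : porderType d) (S : set L) (s : L) : Prop :=
  (forall x, S x -> x <= s) /\
  (forall u, (forall x, S x -> x <= u) -> s <= u).

Definition distributive_join d (L : latticeType d) (S : set L) (s : L) : Prop :=
  forall a : L, is_join [set Order.meet a x | x in S] (Order.meet a s).

Definition kJD (K : Type) d (L : tbDistrLatticeType d) : Prop :=
  forall (S : set L) (s : L), card_lt S (@setT K) -> is_join S s ->
    distributive_join S s.

Definition kFrm (K : Type) d (L : tbDistrLatticeType d) : Prop :=
  forall S : set L, card_lt S (@setT K) ->
    exists s : L, is_join S s /\ distributive_join S s.

Definition JID d (L : tbDistrLatticeType d) : Prop :=
  forall (S : set L) (s : L), is_join S s -> distributive_join S s.

Definition Frm d (L : tbDistrLatticeType d) : Prop :=
  forall S : set L, exists s : L, is_join S s /\ distributive_join S s.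

(* Main.v *)
Require Import Defs.
From HB Require Import structures.
From mathcomp Require Import all_boot all_order.
From mathcomp Require Import boolp classical_sets functions cardinality wochoice.
From mathcomp Require Import zify.
Set Implicit Arguments. Unset Strict Implicit. Unset Printing Implicit Defensive.
Import Order.TTheory.
Section Card.
Local Open Scope classical_set_scope.
Local Open Scope card_scope.

Lemma cle_mk T U (A : set T) (B : set U) (f : T -> U) :
  (forall x, A x -> B (f x)) -> (forall x y, A x -> A y -> f x = f y -> x = y) ->
  A #<= B.
Proof.
move=> fAB finj; apply/card_leP; apply/injfunPex.
exists (fun a : A => (exist _ (f (set_val a)) (mem_set (fAB _ (set_valP a))) : B)) => //.
move=> a b _ _ /(congr1 set_val) /= /finj.
move=> /(_ (set_valP a) (set_valP b)) h; apply: val_inj; exact: h.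
Qed.

Lemma cle_get T U (A : set T) (B : set U) (u0 : U) : A #<= B ->
  exists f : T -> U, (forall x, A x -> B (f x)) /\
    (forall x y, A x -> A y -> f x = f y -> x = y).
Proof.
move=> /card_leP /injfunPex [g _ ginj].
exists (fun x => if pselect (A x) is left Ax then set_val (g (exist _ x (mem_set Ax) : A)) else u0).
split.
  by move=> x Ax; case: pselect => // Ax'; exact: set_valP.
move=> x y Ax Ay; case: pselect => // Ax'; case: pselect => // Ay'.
rewrite set_valE => /val_inj /ginj.
by move=> /(_ (mem_set I) (mem_set I)) /(congr1 val).
Qed.
Definition wo T (lt : T -> T -> Prop) :=
  [/\ (forall x, ~ lt x x), (forall x y z, lt x y -> lt y z -> lt x z),
      (forall x y, [\/ lt x y, x = y | lt y x]) & well_founded lt].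

Lemma wo_min T (lt : T -> T -> Prop) (A : set T) : well_founded lt ->
  (exists x, A x) -> exists m, A m /\ forall x, A x -> ~ lt x m.
Proof.
move=> wf [x Ax]; apply: contrapT => nomin.
suff : forall y, Acc lt y -> ~ A y by move=> /(_ x (wf x)).
move=> y; elim=> z _ IH Az; apply: nomin; exists z; split=> // w Aw lwz.
exact: IH lwz Aw.
Qed.

Lemma exists_wo T : exists lt : T -> T -> Prop, wo lt.
Proof.
have [R wR] := well_ordering_principle {classic T}.
have ex2 : forall x y : {classic T}, nonempty (pred2 x y : {pred {classic T}}).
  by move=> x y; exists x; rewrite !inE eqxx.
have tot : forall x y : {classic T}, R x y \/ R y x.
  move=> x y; have [z [[zin zmin] _]] := wR _ (ex2 x y).
  move: zin; rewrite !inE => /orP[] /eqP ?; subst z.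
    by left; apply: zmin; rewrite !inE eqxx orbT.
  by right; apply: zmin; rewrite !inE eqxx.
have refl : forall x : {classic T}, R x x.
  move=> x; have [z [[zin zmin] _]] := wR _ (ex2 x x).
  by move: zin; rewrite !inE orbb => /eqP ?; subst z; apply: zmin; rewrite !inE eqxx.
have anti : forall x y : {classic T}, R x y -> R y x -> x = y.
  move=> x y Rxy Ryx; have [z [_ zu]] := wR _ (ex2 x y).
  have h1 : minimum_of R (pred2 x y : {pred {classic T}}) x.
    split; first by rewrite !inE eqxx.
    by move=> w; rewrite !inE => /orP[] /eqP -> //; apply: refl.
  have h2 : minimum_of R (pred2 x y : {pred {classic T}}) y.
    split; first by rewrite !inE eqxx orbT.
    by move=> w; rewrite !inE => /orP[] /eqP -> //; apply: refl.
  by rewrite -(zu _ h1) -(zu _ h2).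
have trans : forall x y z : {classic T}, R x y -> R y z -> R x z.
  move=> x y z Rxy Ryz.
  have ne : nonempty (pred3 x y z : {pred {classic T}}) by exists x; rewrite !inE eqxx.
  have [m [[min mmin] _]] := wR _ ne.
  move: min; rewrite !inE => /orP[/eqP mx|/orP[/eqP my|/eqP mz]].
  - by rewrite -mx; apply: mmin; rewrite !inE eqxx !orbT.
  - have Ryx : R y x by rewrite -my; apply: mmin; rewrite !inE eqxx.
    by rewrite (anti _ _ Rxy Ryx).
  - have Rzy : R z y by rewrite -mz; apply: mmin; rewrite !inE eqxx !orbT.
    by rewrite -(anti _ _ Ryz Rzy).
exists (fun x y : {classic T} => R x y /\ x <> y); split.
- by move=> x [].
- move=> x y z [Rxy nxy] [Ryz nyz]; split; first exact: trans Rxy Ryz.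
  by move=> exz; apply: nxy; apply: anti => //; rewrite exz.
- move=> x y; have [->|nxy] := pselect (x = y); first by constructor 2.
  case: (tot x y) => h; [constructor 1|constructor 3]; split => //.
  by move=> e; apply: nxy.
- move=> x; apply: contrapT => nacc.
  pose P := [pred y : {classic T} | `[< ~ Acc (fun x y : {classic T} => R x y /\ x <> y) y >]].
  have ne : nonempty P by exists x; rewrite inE.
  have [m [[min mmin] _]] := wR _ ne.
  move: min; rewrite inE; apply; constructor => y [Rym nym].
  apply: contrapT => nay; apply: nym; apply: anti => //.
  by apply: mmin; rewrite inE.
Qed.

Lemma cle_union (U K I : Type) (u0 : U) (p : U * U -> U) (pinj : injective p)
  (X : set I) (A : I -> set K) (Y : set K) :
  X #<= [set: U] -> (forall i, X i -> A i #<= [set: U]) ->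
  (forall y, Y y -> exists i, X i /\ A i y) -> Y #<= [set: U].
Proof.
move=> XU AU cov.
have [[y0 Yy0]|nY] := pselect (exists y, Y y); last first.
  have -> : Y = set0 by apply/seteqP; split=> y //= Yy; apply: nY; exists y.
  exact: card_ge0.
have [i0 _] := cov _ Yy0.
have [g [_ ginj]] := cle_get u0 XU.
have [f fP] : exists f : I -> K -> U, forall i, X i ->
    forall x y, A i x -> A i y -> f i x = f i y -> x = y.
  have H : forall i, exists f : K -> U, X i -> forall x y, A i x -> A i y -> f x = f y -> x = y.
    move=> i; have [Xi|nXi] := pselect (X i); last by exists (fun _ => u0).
    by have [f [_ fi]] := cle_get u0 (AU i Xi); exists f.
  by have [f0 fP0] := choice H; exists f0.
have [idx idxP] : exists idx : K -> I, forall y, Y y -> X (idx y) /\ A (idx y) y.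
  have H : forall y, exists i, Y y -> X i /\ A i y.
    move=> y; have [Yy|nYy] := pselect (Y y); last by exists i0.
    by have [i Pi] := cov y Yy; exists i.
  by have [f0 fP0] := choice H; exists f0.
apply: (@cle_mk _ _ _ _ (fun y => p (g (idx y), f (idx y) y))) => // x y Yx Yy.
move=> /pinj [] /(ginj _ _ (proj1 (idxP _ Yx)) (proj1 (idxP _ Yy))) eidx.
have [Xi Ax] := idxP _ Yx; have [_ Ay] := idxP _ Yy.
rewrite -eidx in Ay *; exact: fP.
Qed.

Section Reg.
Variables (U K : Type) (u0 : U) (ltK : K -> K -> Prop).
Hypothesis woK : wo ltK.
Variables (p : U * U -> U) (o : option U -> U).
Hypotheses (pinj : injective p) (oinj : injective o).
Hypothesis segK : forall k, [set k' | ltK k' k] #<= [set: U].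
Hypothesis notKU : ~ ([set: K] #<= [set: U]).

Let irrK : forall x, ~ ltK x x. Proof. by case: woK. Qed.
Let trK : forall x y z, ltK x y -> ltK y z -> ltK x z. Proof. by case: woK. Qed.
Let triK : forall x y, [\/ ltK x y, x = y | ltK y x]. Proof. by case: woK. Qed.
Let wfK : well_founded ltK. Proof. by case: woK. Qed.

Lemma segle k : [set k' | ltK k' k \/ k' = k] #<= [set: U].
Proof.
have [f [_ finj]] := cle_get u0 (segK k).
apply: (@cle_mk _ _ _ _ (fun k' => if pselect (k' = k) then o None else o (Some (f k')))) => //.
move=> x y Hx Hy; case: (pselect (x = k)) => [ex|nx]; case: (pselect (y = k)) => [ey|ny].
- by move=> _; rewrite ex ey.
- by move=> /oinj.
- by move=> /oinj.
- move=> /oinj [] /finj; apply.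
  + by case: Hx.
  + by case: Hy.
Qed.

Lemma bounded (Z : set K) : Z #<= [set: U] -> exists k, forall z, Z z -> ltK z k.
Proof.
move=> ZU; apply: contrapT => nb; apply: notKU.
apply: (cle_union u0 pinj (A := fun z => [set k' | ltK k' z \/ k' = z]) ZU).
  by move=> i _; exact: segle.
move=> y _; apply: contrapT => ny; apply: nb; exists y => z Zz.
have [//|ezy|lyz] := triK z y.
- by exfalso; apply: ny; exists z; split=> //; right.
- by exfalso; apply: ny; exists z; split=> //; left.
Qed.

Lemma K_inhabited : inhabited K.
Proof.
apply: contrapT => nK; apply: notKU.
have -> : [set: K] = set0 by apply/seteqP; split=> // x; exfalso; apply: nK.
exact: card_ge0.
Qed.


Lemma rank (Y : Type) (ltY : Y -> Y -> Prop) (woY : wo ltY) (A : set Y) :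
  [set: K] #<= A \/ exists g, A #<= [set k | ltK k g].
Proof.
have [k0] := K_inhabited.
case: woY => irrY trY triY wfY.
pose minK (P : set K) : K :=
  if pselect (exists m, P m /\ forall x, P x -> ~ ltK x m) is left e
  then projT1 (cid e) else k0.
have minKP : forall P, (exists x, P x) -> P (minK P) /\ forall x, P x -> ~ ltK x (minK P).
  move=> P neP; rewrite /minK; case: pselect => [e|ne]; first by case: (cid e) => m [].
  by exfalso; apply: ne; exact: wo_min neP.
pose F := fun (y : Y) (rec : forall y', ltY y' y -> K) =>
  minK [set k | forall y' (q : ltY y' y), A y' -> ltK (rec y' q) k].
pose h := Fix wfY (fun _ => K) F.
pose H y := [set k | forall y', ltY y' y -> A y' -> ltK (h y') k].
have hE : forall y, h y = minK (H y).
  move=> y; rewrite /h Fix_eq //.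
  move=> x f g fg; rewrite /F; congr minK; apply/funext => k; apply/propext.
  by split => Hk y' q Ay'; [rewrite -fg | rewrite fg]; exact: Hk.
have core : forall A' : set Y, (forall y, A' y -> A y) ->
    (forall y y', A' y -> A y' -> ltY y' y -> A' y') ->
    (forall y, A' y -> exists k, H y k) ->
    [/\ (forall y y', A' y -> A' y' -> h y = h y' -> y = y'),
        (forall y, A' y -> forall k, ltK k (h y) \/ k = h y -> exists y'', A' y'' /\ h y'' = k) &
        ((forall k, exists y, A' y /\ h y = k) -> [set: K] #<= A)].
  move=> A' A'A dc ne.
  have c1 : forall y, A' y -> H y (h y) /\ forall k, H y k -> ~ ltK k (h y).
    by move=> y A'y; rewrite hE; apply: minKP; exact: ne.
  have c2 : forall y y', A' y -> A' y' -> ltY y' y -> ltK (h y') (h y).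
    by move=> y y' A'y A'y' lt; apply: (proj1 (c1 y A'y)) => //; exact: A'A.
  split.
  - move=> y y' A'y A'y' ehy; have [lt|//|lt] := triY y y'.
    + by have := c2 _ _ A'y' A'y lt; rewrite ehy => /irrK.
    + by have := c2 _ _ A'y A'y' lt; rewrite ehy => /irrK.
  - move=> y; elim/(well_founded_induction wfY): y => y IH A'y k [lk|->]; last by exists y.
    have nH : ~ H y k by move=> Hk; exact: (proj2 (c1 y A'y)) Hk lk.
    have [y' [ly'y [Ay' nl]]] : exists y', ltY y' y /\ A y' /\ ~ ltK (h y') k.
      apply: contrapT => nex; apply: nH => y' ly'y Ay'; apply: contrapT => nl.
      by apply: nex; exists y'.
    have A'y' := dc _ _ A'y Ay' ly'y.
    have [lk'|ek|lk'] := triK k (h y').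
    + exact: IH ly'y A'y' k (or_introl lk').
    + exact: IH ly'y A'y' k (or_intror ek).
    + by exfalso; apply: nl.
  - move=> full; have [inv invP] := choice full.
    apply: (@cle_mk _ _ _ _ inv).
      by move=> k _; apply: A'A; case: (invP k).
    move=> x y _ _ e; case: (invP x) => _ <-; case: (invP y) => _ <-.
    by rewrite e.
have [[y0 Ey0]|nE] := pselect (exists y, A y /\ ~ exists k, H y k).
  have [y1 [[Ay1 nHy1] y1min]] := wo_min (A := fun y => A y /\ ~ exists k, H y k) wfY (ex_intro _ y0 Ey0).
  have h1 : forall y, A y /\ ltY y y1 -> A y by move=> y [].
  have h2 : forall y y', A y /\ ltY y y1 -> A y' -> ltY y' y -> A y' /\ ltY y' y1.
    move=> y y' [Ay ly] Ay' ly'; split => //; exact: trY ly' ly.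
  have h3 : forall y, A y /\ ltY y y1 -> exists k, H y k.
    move=> y [Ay ly]; apply: contrapT => nH; exact: y1min (conj Ay nH) ly.
  have [_ c3 c4] := core (fun y => A y /\ ltY y y1) h1 h2 h3.
  left; apply: c4 => k.
  have [y' [ly'y [Ay' nl]]] : exists y', ltY y' y1 /\ A y' /\ ~ ltK (h y') k.
    apply: contrapT => nex; apply: nHy1; exists k => y' ly'y Ay'; apply: contrapT => nl.
    by apply: nex; exists y'.
  have [lk'|ek|lk'] := triK k (h y').
  + exact: c3 (conj Ay' ly'y) k (or_introl lk').
  + exact: c3 (conj Ay' ly'y) k (or_intror ek).
  + by exfalso; apply: nl.
have h3 : forall y, A y -> exists k, H y k.
  by move=> y Ay; apply: contrapT => nH; apply: nE; exists y; split.
have [hinj c3 c4] := core A (fun y Ay => Ay) (fun y y' _ Ay' _ => Ay') h3.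
have [full|nfull] := pselect (forall k, exists y, A y /\ h y = k); first by left; exact: c4.
right; have [g ng] : exists g, forall y, A y -> h y <> g.
  apply: contrapT => nex; apply: nfull => k; apply: contrapT => nk; apply: nex; exists k.
  by move=> y Ay ehy; apply: nk; exists y.
exists g; apply: (@cle_mk _ _ _ _ h); last by move=> x y Ax Ay; exact: hinj.
move=> y Ay /=; have [//|ehy|lgh] := triK (h y) g; first by exfalso; exact: ng Ay ehy.
have [y'' [Ay'' e]] := c3 y Ay g (or_introl lgh); by exfalso; exact: ng Ay'' e.
Qed.

Hypothesis natU : [set: nat] #<= [set: U].

Lemma reg_main : regular_card K /\ [set: U] #<= [set: K].
Proof.
have small : forall Z : set K, ~ ([set: K] #<= Z) -> Z #<= [set: U].
  move=> Z nKZ; case: (rank woK Z) => [//|[g Zg]]; exact: card_le_trans Zg (segK g).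
split.
- split.
    move=> /finite_set_countable KN; apply: notKU; exact: card_le_trans KN natU.
  move=> X A [_ nKX] Asmall eq.
  apply: notKU; apply: (cle_union u0 pinj (A := A) (small _ nKX)).
    by move=> i Xi; apply: small; case: (Asmall i Xi).
  move=> y _; have : (\bigcup_(i in X) A i) y by rewrite eq.
  by case=> i Xi Ay; exists i.
- have [ltU woU] := exists_wo U.
  case: (rank woU [set: U]) => [//|[g Ug]].
  exact: card_le_trans Ug (subset_card_le (@subsetT _ _)).
Qed.

End Reg.

Lemma sig_eq (V : Type) (P : V -> Prop) (a b : {x | P x}) :
  proj1_sig a = proj1_sig b -> a = b.
Proof.
case: a b => [x px] [y py] /= exy; subst y; congr exist; exact: Prop_irrelevance.
Qed.

Lemma exists_reg (T : Type) (S : set T) :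
  exists K : Type, regular_card K /\ card_lt S [set: K].
Proof.
pose U := nat -> (nat + T)%type.
pose u0 : U := fun _ => inl 0%N.
pose p : U * U -> U := fun ab n => if odd n then ab.1 n./2 else ab.2 n./2.
have pinj : injective p.
  move=> [a b] [a' b'] e; congr pair; apply/funext => n.
  - by have := congr1 (fun f => f n.*2.+1) e; rewrite /p /= odd_double /= uphalf_double.
  - by have := congr1 (fun f => f n.*2) e; rewrite /p /= odd_double /= doubleK.
pose o : option U -> U := fun ou => if ou is Some u then
   (fun n => if n is n'.+1 then u n' else inl 1%N) else u0.
have oinj : injective o.
  move=> [u|] [v|] //= e.
  - by congr Some; apply/funext => n; have := congr1 (fun f => f n.+1) e.
  - by have := congr1 (fun f => f 0%N) e.
  - by have := congr1 (fun f => f 0%N) e.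
have natU : [set: nat] #<= [set: U].
  apply: (@cle_mk _ _ _ _ (fun n => fun _ => inl n)) => // x y _ _ e.
  by have := congr1 (fun f => f 0%N) e => -[].
have TU : [set: T] #<= [set: U].
  apply: (@cle_mk _ _ _ _ (fun x => fun _ => inr x)) => // x y _ _ e.
  by have := congr1 (fun f => f 0%N) e => -[].
pose V := U -> bool.
have cantor : ~ ([set: V] #<= [set: U]).
  move=> /(cle_get u0) [f [_ finj]].
  pose d : V := fun u => ~~ `[< exists v, f v = u /\ v u >].
  have : d (f d) = ~~ d (f d).
    rewrite {1}/d; congr negb; apply/asboolP; case: ifPn => dfd.
      by exists d.
    by case=> v [/finj e]; rewrite e //; apply/negP.
  by case: (d (f d)).
have [ltV woV] := exists_wo V.
have [Kp [segKp notKp]] : exists Kp : set V,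
    (forall x, Kp x -> [set y | ltV y x] #<= [set: U]) /\ ~ (Kp #<= [set: U]).
  have [ex|nex] := pselect (exists b, ~ ([set y | ltV y b] #<= [set: U])).
    have [a [na amin]] := wo_min (A := fun b => ~ ([set y | ltV y b] #<= [set: U])) (let: And4 _ _ _ w := woV in w) ex.
    exists [set y | ltV y a]; split => // x xa; apply: contrapT => nx; exact: amin nx xa.
  exists [set: V]; split => // x _; apply: contrapT => nx; apply: nex; by exists x.
pose K := {x : V | Kp x}.
pose ltK (a b : K) := ltV (proj1_sig a) (proj1_sig b).
have woK : wo ltK.
  case: woV => irr tr tri wf; split.
  - by move=> x; apply: irr.
  - by move=> x y z; apply: tr.
  - move=> x y; case: (tri (proj1_sig x) (proj1_sig y)) => h.
    + by constructor 1.
    + by constructor 2; apply: sig_eq.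
    + by constructor 3.
  - suff H : forall x, Acc ltV x -> forall a : K, proj1_sig a = x -> Acc ltK a.
      by move=> a; exact: H _ (wf _) a erefl.
    move=> x; elim=> x' _ IH a ea; constructor => b lba.
    by apply: (IH (proj1_sig b)) => //; rewrite /ltK ea in lba.
have segK : forall k : K, [set k' | ltK k' k] #<= [set: U].
  move=> k; apply: card_le_trans (segKp _ (proj2_sig k)).
  apply: (@cle_mk _ _ _ _ (@proj1_sig _ _)) => // x y _ _; exact: sig_eq.
have notKU : ~ ([set: K] #<= [set: U]).
  move=> KU; apply: notKp.
  have [[x0 Kx0]|nK] := pselect (exists x, Kp x); last first.
    have -> : Kp = set0 by apply/seteqP; split=> x //= Kx; apply: nK; exists x.
    exact: card_ge0.
  apply: card_le_trans KU.
  apply: (@cle_mk _ _ _ _ (fun x => if pselect (Kp x) is left h then exist _ x h else exist _ x0 Kx0 : K)) => //.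
  move=> x y Kx Ky; case: pselect => // hx; case: pselect => // hy.
  by move=> /(congr1 (@proj1_sig _ _)).
have [reg UK] := @reg_main U K u0 ltK woK p pinj segK notKU natU.
exists K; split => //.
have SK : S #<= [set: K].
  apply: card_le_trans UK; apply: card_le_trans TU; exact: subset_card_le.
split => // KS; apply: notKU; apply: card_le_trans KS _.
by apply: card_le_trans TU; exact: subset_card_le.
Qed.

End Card.

Section GenL.
Local Open Scope classical_set_scope.
Local Open Scope order_scope.
Section Gen.
Variables (d : Order.disp_t) (L : tbDistrLatticeType d).

Lemma join_uniq (S : set L) s s' : is_join S s -> is_join S s' -> s = s'.
Proof.
move=> [ub lub] [ub' lub']; apply: le_anti; rewrite lub ?lub' //.
Qed.

Lemma kFrm_kJD (K : Type) : kFrm K L -> kJD K L.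
Proof.
move=> F S s Sc js; have [s' [js' ds']] := F S Sc.
by rewrite (join_uniq js js').
Qed.

Lemma chain_JID : (forall x y : L, x <= y \/ y <= x) -> JID L.
Proof.
move=> tot S s [ub lub] a; split.
  by move=> _ [x Sx <-]; apply: leI2 => //; apply: ub.
move=> u uub.
have [au|nau] := boolP (a <= u).
  by apply: le_trans au; exact: leIl.
have sub : forall x, S x -> x <= u.
  move=> x Sx; have h : a `&` x <= u by apply: uub; exists x.
  have [ax|xa] := tot a x.
    by move/meet_idPl: ax h => -> au; rewrite au in nau.
  by move/meet_idPr: xa h; rewrite meetC => ->.
by apply: le_trans (leIr _ _) (lub _ sub).
Qed.

Lemma join_seq_le (s : seq L) u : (forall x, x \in s -> x <= u) -> \join_(x <- s) x <= u.
Proof.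
elim: s => [|y s IH] H; first by rewrite big_nil le0x.
rewrite big_cons leUx H ?mem_head //= IH // => x xs; apply: H; by rewrite in_cons xs orbT.
Qed.

Lemma le_join_seq (s : seq L) x : x \in s -> x <= \join_(y <- s) y.
Proof.
elim: s => [|y s IH] //; rewrite in_cons big_cons => /orP[/eqP ->|xs].
  exact: leUl.
exact: le_trans (IH xs) (leUr _ _).
Qed.

Lemma meet_join_seq a (s : seq L) : a `&` \join_(x <- s) x = \join_(x <- s) (a `&` x).
Proof.
elim: s => [|y s IH]; first by rewrite !big_nil meetx0.
by rewrite !big_cons meetUr IH.
Qed.

Lemma kFrm_nat : kFrm nat L.
Proof.
move=> S [_ nS]; have fS : finite_set S by apply/finite_setPn.
have [X ->] := (finite_seqP S).1 fS.
exists (\join_(x <- X) x); split.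
  split; first by move=> x /= xX; exact: le_join_seq.
  by move=> u uub; apply: join_seq_le => x xX; apply: uub.
move=> a; rewrite meet_join_seq; split.
  move=> _ [x /= xX <-]; rewrite -(big_map (fun y => a `&` y) xpredT id).
  by apply: le_join_seq; apply: map_f.
move=> u uub; rewrite -(big_map (fun y => a `&` y) xpredT id).
apply: join_seq_le => y /mapP [x xX ->]; apply: uub; by exists x.
Qed.

Lemma top_join (S : set L) : S \top -> is_join S \top /\ distributive_join S \top.
Proof.
move=> St; split.
  split; first by move=> x _; exact: lex1.
  by move=> u /(_ _ St).
move=> a; rewrite meetx1; split; first by move=> _ [x Sx <-]; exact: leIl.
move=> u H; have := H (a `&` \top); rewrite meetx1; apply.
by exists \top => //; rewrite meetx1.
Qed.
End Gen.

End GenL.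

Fact my_disp : Order.disp_t. Proof. exact: Order.Disp tt tt. Qed.

Definition W2 := nat.
HB.instance Definition _ := Choice.on W2.

Definition le2 (m n : W2) : bool :=
  if odd m then odd n && (n./2 <= m./2)%N else odd n || (m <= n)%N.

Lemma nat_oh (m : nat) : m = (odd m + m./2.*2)%N.
Proof. by rewrite odd_double_half. Qed.

Lemma le2_refl : reflexive le2.
Proof. by move=> m; rewrite /le2; case: ifP => ->; rewrite ?leqnn ?orbT. Qed.

Lemma le2_anti : antisymmetric le2.
Proof.
move=> m n; rewrite /le2 (nat_oh m) (nat_oh n).
case: (odd m); case: (odd n) => /=; rewrite ?odd_double /=; lia.
Qed.

Lemma le2_trans : transitive le2.
Proof.
move=> n m p; rewrite /le2.
case: (boolP (odd m)) => om; case: (boolP (odd n)) => on; case: (boolP (odd p)) => op /=; lia.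
Qed.

Lemma le2_total : total le2.
Proof.
move=> m n; rewrite /le2.
case: (boolP (odd m)) => om; case: (boolP (odd n)) => on /=; lia.
Qed.

HB.instance Definition _ := Order.Le_isPOrder.Build my_disp W2 le2_refl le2_anti le2_trans.
HB.instance Definition _ := Order.POrder_isTotal.Build my_disp W2 le2_total.
Lemma le2_0 (x : W2) : le2 0%N x.
Proof. by rewrite /le2 /=; case: (odd x). Qed.
Lemma le2_1 (x : W2) : le2 x 1%N.
Proof. by rewrite /le2 /=; case: (odd x). Qed.
HB.instance Definition _ := Order.hasBottom.Build my_disp W2 le2_0.
HB.instance Definition _ := Order.hasTop.Build my_disp W2 le2_1.

Section W2S.
Local Open Scope order_scope.
Lemma W2le (x y : W2) : (x <= y) = le2 x y.
Proof. by []. Qed.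

Lemma W2_noevens : ~ exists s : W2, is_join [set x : W2 | ~~ odd x] s.
Proof.
move=> [s [ub lub]]; case: (boolP (odd s)) => os.
  have : le2 s s.+2.
    rewrite -W2le; apply: lub => x /= ex; rewrite W2le /le2 (negbTE ex) /=.
    by rewrite os.
  rewrite /le2 os /= os /=; have := nat_oh s; rewrite os /=; lia.
have : le2 s.+2 s by rewrite -W2le; apply: ub => /=; rewrite negbK.
by rewrite /le2 /= (negbTE os) /=; lia.
Qed.

End W2S.

Section L1S.
Local Open Scope classical_set_scope.
Local Open Scope card_scope.
Fact my_disp1 : Order.disp_t. Proof. exact: Order.Disp tt tt. Qed.

Section Small.
Variables (Lam : Type) (regL : regular_card Lam).
Definition small1 (A : set (option Lam)) : Prop := ~ ([set: Lam] #<= A).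

Lemma Lam_inh : exists l : Lam, True.
Proof.
have := infinite_setN0 (proj1 regL) => -[l _]; by exists l.
Qed.

Lemma small_bigcup (I : Type) (X : set I) (F : I -> set (option Lam)) :
  X #<= [set: Lam] -> ~ ([set: Lam] #<= X) -> (forall i, X i -> small1 (F i)) ->
  small1 (\bigcup_(i in X) F i).
Proof.
move=> XL nLX sF LW.
have [l0 _] := Lam_inh.
have [f [fP finj]] := cle_get None LW.
have [g [_ ginj]] := cle_get l0 XL.
pose A j := [set x | exists i, X i /\ g i = j /\ F i (f x)].
apply: (proj2 regL (g @` X) A).
- split; first exact: subset_card_le.
  move=> LX'; apply: nLX; exact: card_le_trans LX' (card_image_le _ _).
- move=> j [i0 Xi0 <-]; split; first exact: subset_card_le.
  move=> LA; apply: (sF i0 Xi0); apply: card_le_trans LA _.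
  apply: (@cle_mk _ _ _ _ f).
    by move=> x [i [Xi [gi Fi]]]; rewrite -(ginj _ _ Xi Xi0 gi).
  by move=> x y _ _ /finj; apply.
- apply/seteqP; split => // x _; have [i Xi Fi] := fP x Logic.I.
  by exists (g i); [exists i | exists i].
Qed.

Lemma small1_2 A B : small1 A -> small1 B -> small1 (A `|` B).
Proof.
move=> sA sB.
have -> : A `|` B = \bigcup_(b in [set: bool]) (if b then A else B).
  apply/seteqP; split => x.
    by case=> ?; [exists true | exists false].
  by case=> -[] _ ?; [left | right].
apply: small_bigcup; last by case.
  apply: card_le_trans (proj1 (infiniteP _) (proj1 regL)).
  by apply: (@cle_mk _ _ _ _ nat_of_bool) => // -[] [].
move=> Lb; apply: (proj1 regL); apply: card_le_finite Lb _; exact: finite_finset.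
Qed.

Lemma small0 : small1 set0.
Proof.
move=> /card_le0P e; have [l0 _] := Lam_inh.
by have : [set: Lam] l0 by []; rewrite e.
Qed.

Record L1 := MkL1 { L1v : set (option Lam); L1p : small1 L1v \/ L1v = setT }.

Lemma L1eq (a b : L1) : L1v a = L1v b -> a = b.
Proof. case: a b => [A pa] [B pb] /= eAB; subst B; congr MkL1; exact: Prop_irrelevance. Qed.

Definition L1T (_ : regular_card Lam) := L1.
HB.instance Definition _ := gen_eqMixin (L1T regL).
HB.instance Definition _ := gen_choiceMixin (L1T regL).

Lemma small1_sub (A B : set (option Lam)) : A `<=` B -> small1 B -> small1 A.
Proof. by move=> AB sB LA; apply: sB; apply: card_le_trans LA (subset_card_le AB). Qed.

Definition meet1 (a b : L1T regL) : L1T regL.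
refine (@MkL1 (L1v a `&` L1v b) _).
case: (L1p a) => [sa|ea]; first by left; apply: small1_sub sa; exact: subIsetl.
by rewrite ea setTI; exact: L1p b.
Defined.


Definition join1 (a b : L1T regL) : L1T regL.
refine (@MkL1 (L1v a `|` L1v b) _).
case: (L1p a) => [sa|ea]; last by right; rewrite ea setTU.
case: (L1p b) => [sb|eb]; last by right; rewrite eb setUT.
by left; exact: small1_2.
Defined.

Definition le1 (a b : L1T regL) : bool := meet1 a b == a.
Definition lt1 (a b : L1T regL) : bool := (b != a) && le1 a b.

Ltac sett := apply: L1eq; apply/seteqP; split => x /=; tauto.

Lemma meet1C : commutative meet1. Proof. by move=> a b; sett. Qed.
Lemma join1C : commutative join1. Proof. by move=> a b; sett. Qed.
Lemma meet1A : associative meet1. Proof. by move=> a b c; sett. Qed.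
Lemma join1A : associative join1. Proof. by move=> a b c; sett. Qed.
Lemma join1KI : forall y x, meet1 x (join1 x y) = x. Proof. by move=> a b; sett. Qed.
Lemma meet1KU : forall y x, join1 x (meet1 x y) = x. Proof. by move=> a b; sett. Qed.
Lemma meet1Ul : left_distributive meet1 join1. Proof. by move=> a b c; sett. Qed.
Lemma meet1xx : idempotent_op meet1. Proof. by move=> a; sett. Qed.

HB.instance Definition _ := Order.isMeetJoinDistrLattice.Build my_disp1 (L1T regL)
  (fun _ _ => erefl) (fun _ _ => erefl) meet1C join1C meet1A join1A join1KI meet1KU meet1Ul meet1xx.

Definition bot1 : L1T regL := MkL1 (or_introl small0).
Definition top1 : L1T regL := MkL1 (or_intror (erefl (@setT (option Lam)))).

Lemma le1P (a b : L1T regL) : reflect (L1v a `<=` L1v b) (Order.le a b).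
Proof.
apply: (iffP eqP) => [e|sub].
  move=> x ax; have : L1v (meet1 a b) x by rewrite e.
  by case.
apply: L1eq; apply/seteqP; split => x /=; [by case | by move=> ax; split => //; apply: sub].
Qed.

Lemma bot1P (x : L1T regL) : Order.le bot1 x. Proof. by apply/le1P. Qed.
Lemma top1P (x : L1T regL) : Order.le x top1. Proof. by apply/le1P. Qed.
HB.instance Definition _ := Order.hasBottom.Build my_disp1 (L1T regL) bot1P.
HB.instance Definition _ := Order.hasTop.Build my_disp1 (L1T regL) top1P.



Local Open Scope order_scope.
Lemma L1_kFrm : kFrm Lam (L1T regL).
Proof.
move=> S [SL nLS].
have [[a0 [Sa0 ea0]]|nt] := pselect (exists a, S a /\ L1v a = setT).
  have e : a0 = \top by apply: L1eq; rewrite ea0.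
  by exists \top; apply: top_join; rewrite -e.
have sm : forall a, S a -> small1 (L1v a).
  move=> a Sa; case: (L1p a) => // ea; exfalso; apply: nt; by exists a.
have sW := small_bigcup SL nLS sm.
exists (MkL1 (or_introl sW) : L1T regL); split.
  split; first by move=> x Sx; apply/le1P => y xy; exists x.
  move=> u uub; apply/le1P => y [x Sx xy]; have := uub x Sx => /le1P; apply.
  exact: xy.
move=> a; split.
  move=> _ [x Sx <-]; apply/le1P => y [ay xy]; split => //; by exists x.
move=> u uub; apply/le1P => y [ay [x Sx xy]].
have := uub (Order.meet a x) (ex_intro2 _ _ x Sx erefl) => /le1P; apply.
by split.
Qed.

Lemma single_small (o : option Lam) : small1 [set o].
Proof.
move=> Lo; apply: (proj1 regL); apply: card_le_finite Lo _; exact: finite_set1.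
Qed.

Lemma L1_notkJD (K : Type) : card_lt [set: Lam] [set: K] -> ~ kJD K (L1T regL).
Proof.
move=> [LK nKL] J.
pose sing (x : Lam) : L1T regL := MkL1 (or_introl (@single_small (Some x))).
pose aN : L1T regL := MkL1 (or_introl (@single_small None)).
pose S := [set sing x | x in [set: Lam]].
have jS : is_join S \top.
  split; first by move=> x _; exact: lex1.
  move=> u uub; case: (L1p u) => [su|eu]; last by apply/le1P; rewrite eu.
  exfalso; apply: su; apply: (@cle_mk _ _ _ _ Some).
    move=> x _; have := uub (sing x) (ex_intro2 _ _ x Logic.I erefl) => /le1P; apply.
    by [].
  by move=> x y _ _ [].
have cS : card_lt S [set: K].
  split; first exact: card_le_trans (card_image_le _ _) LK.
  by move=> KS; apply: nKL; exact: card_le_trans KS (card_image_le _ _).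
have [_ lub] := J S \top cS jS aN.
have : Order.le (Order.meet aN \top) \bot.
  apply: lub => _ [y [x _ <-] <-]; apply/le1P => z [zN zx].
  by move: zx; rewrite /= zN.
by move=> /le1P /(_ None) H; apply: H.
Qed.

End Small.

End L1S.

Lemma clt_le T U V (S : set T) (A : set U) (B : set V) :
  card_lt S A -> (A #<= B)%card -> card_lt S B.
Proof.
move=> [SA nAS] AB; split; first exact: card_le_trans SA AB.
by move=> BS; apply: nAS; exact: card_le_trans AB BS.
Qed.

Theorem theorem4p1 :
  (* (i) DLat = omega0 JD = omega0 Frm *)
  (forall (d : Order.disp_t) (L : tbDistrLatticeType d),
      kJD nat L /\ kFrm nat L) /\
  (* (ii) *)
  (forall (K Λ : Type), regular_card K -> regular_card Λ ->
     ((@setT Λ #<= @setT K)%card ->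
        forall (d : Order.disp_t) (L : tbDistrLatticeType d),
          (kJD K L -> kJD Λ L) /\ (kFrm K L -> kFrm Λ L)) /\
     (card_lt (@setT Λ) (@setT K) ->
        (exists (d : Order.disp_t) (L : tbDistrLatticeType d),
            kJD Λ L /\ ~ kJD K L) /\
        (exists (d : Order.disp_t) (L : tbDistrLatticeType d),
            kFrm Λ L /\ ~ kFrm K L))) /\
  (* (iii) *)
  (forall K : Type, regular_card K ->
     (forall (d : Order.disp_t) (L : tbDistrLatticeType d), kFrm K L -> kJD K L) /\
     (card_lt (@setT nat) (@setT K) ->
        exists (d : Order.disp_t) (L : tbDistrLatticeType d),
          kJD K L /\ ~ kFrm K L)) /\
  (* (iv) *)
  (forall (d : Order.disp_t) (L : tbDistrLatticeType d),
     (JID L <-> forall K : Type, regular_card K -> kJD K L) /\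
     (Frm L <-> forall K : Type, regular_card K -> kFrm K L)).
Proof.
split; [|split; [|split]].
- by move=> d L; split; [apply: kFrm_kJD; exact: kFrm_nat | exact: kFrm_nat].
- move=> K Lam regK regL; split.
    move=> LK d L; split.
      by move=> J S s SL js; apply: J js; exact: clt_le SL LK.
    by move=> F S SL; apply: F; exact: clt_le SL LK.
  move=> LK; split.
    exists my_disp1, (L1T regL); split; first by apply: kFrm_kJD; exact: L1_kFrm.
    exact: (@L1_notkJD _ regL K LK).
  exists my_disp1, (L1T regL); split; first exact: L1_kFrm.
  by move=> /kFrm_kJD; exact: (@L1_notkJD _ regL K LK).
- move=> K regK; split; first by move=> d L; exact: kFrm_kJD.
  move=> [NK nKN]; exists my_disp, W2; split.
    have tot : forall x y : W2, (x <= y)%O \/ (y <= x)%O.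
      by move=> x y; apply/orP; exact: le_total.
    by move=> S s _ js; exact: (chain_JID tot) S s js.
  move=> F; have cE : card_lt [set x : W2 | ~~ odd x] [set: K].
    split; first by apply: card_le_trans NK; exact: subset_card_le.
    by move=> KE; apply: nKN; apply: card_le_trans KE _; exact: subset_card_le.
  have [s [js _]] := F _ cE.
  by apply: W2_noevens; exists s.
- move=> d L; split; split.
  + by move=> J K _ S s _ js; exact: J.
  + move=> H S s js; have [K [regK cS]] := exists_reg S; exact: H K regK S s cS js.
  + by move=> F K _ S _; exact: F.
  + move=> H S; have [K [regK cS]] := exists_reg S; exact: H K regK S cS.
Qed.
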